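(* For $\omega\in[0,1]$ let $p_0^{\ast}(\omega)$ be the unique positive solution $p$ of $c_1\chi\omega(1-\omega)\tau_D^2p^2+(\alpha+c_2(1-\omega)\tau_D)p-\varepsilon_D=0$ (the pollution level of the steady state $(0,p_0^\ast,\chi\omega\tau_Dp_0^\ast)$ with only dirty producers). If $$\varepsilon_D>\frac{c_2^2\tau_D+\alpha c_2}{c_1\chi\tau_D},$$ then there exists $\tilde\omega\in(0,1/2)$ such that $\omega\mapsto p_0^{\ast}(\omega)$ is decreasing on $[0,\tilde\omega)$ and increasing on $(\tilde\omega,1]$. If this inequality does not hold, then $\omega\mapsto p_0^{\ast}(\omega)$ is increasing on $[0,1]$.
   Context: Parameters: $\tau_D>\tau_C\ge0$, $\varepsilon_D>\varepsilon_C\ge 0$, $\alpha\in(0,1]$, $\sigma\in[0,1)$, $\gamma\in[0,1)$, $d>0$, $c_1>0$, $c_2\ge 0$, and $\chi=(d/(1-\sigma))^{1/(1-\gamma)}$. *)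

(* Defs.v *)
From Stdlib Require Import Reals Lra.
Open Scope R_scope.

Definition chi (d sigma gamma : R) : R :=
  Rpower (d / (1 - sigma)) (1 / (1 - gamma)).

Definition p0_root (c1 c2 alpha tauD epsD ch omega p : R) : Prop :=
  0 < p /\
  c1 * ch * omega * (1 - omega) * tauD ^ 2 * p ^ 2
    + (alpha + c2 * (1 - omega) * tauD) * p - epsD = 0.

(* Main.v *)
Require Import Defs.
From Stdlib Require Import Reals Lra Psatz.
Open Scope R_scope.

Lemma cmp_inc (K b al eps x y px py : R) :
  0 < K -> 0 < b -> 0 < al -> 0 <= x -> x < y -> y <= 1 -> 0 < px -> 0 < py ->
  K*x*(1-x)*px^2 + (al + b*(1-x))*px - eps = 0 ->
  K*y*(1-y)*py^2 + (al + b*(1-y))*py - eps = 0 ->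
  K*(1-x-y)*px < b -> px < py.
Proof.
  intros HK Hb Hal Hx Hxy Hy Hpx Hpy Ex Ey H.
  set (M := K*y*(1-y)*(py+px) + al + b*(1-y)).
  assert (HM : 0 < M).
  { unfold M. assert (0 <= y*(1-y)) by nra.
    assert (0 <= K*(y*(1-y))*(py+px)) by (apply Rmult_le_pos; [apply Rmult_le_pos|]; lra).
    nra. }
  assert (Hid : (py-px)*M = (y-x)*px*(b - K*(1-x-y)*px)
     + ((K*y*(1-y)*py^2 + (al + b*(1-y))*py - eps) - (K*x*(1-x)*px^2 + (al + b*(1-x))*px - eps)))
    by (unfold M; ring).
  rewrite Ex, Ey in Hid.
  assert (0 < (y-x)*px*(b - K*(1-x-y)*px)).
  { apply Rmult_lt_0_compat; [apply Rmult_lt_0_compat|]; lra. }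
  nra.
Qed.

Lemma cmp_dec (K b al eps x y px py : R) :
  0 < K -> 0 < b -> 0 < al -> 0 <= x -> x < y -> y <= 1 -> 0 < px -> 0 < py ->
  K*x*(1-x)*px^2 + (al + b*(1-x))*px - eps = 0 ->
  K*y*(1-y)*py^2 + (al + b*(1-y))*py - eps = 0 ->
  K*(1-x-y)*py > b -> py < px.
Proof.
  intros HK Hb Hal Hx Hxy Hy Hpx Hpy Ex Ey H.
  set (M := K*x*(1-x)*(px+py) + al + b*(1-x)).
  assert (HM : 0 < M).
  { unfold M. assert (0 <= x*(1-x)) by nra.
    assert (0 <= K*(x*(1-x))*(px+py)) by (apply Rmult_le_pos; [apply Rmult_le_pos|]; lra).
    nra. }
  assert (Hid : (px-py)*M = (y-x)*py*(K*(1-x-y)*py - b)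
     + ((K*x*(1-x)*px^2 + (al + b*(1-x))*px - eps) - (K*y*(1-y)*py^2 + (al + b*(1-y))*py - eps)))
    by (unfold M; ring).
  rewrite Ex, Ey in Hid.
  assert (0 < (y-x)*py*(K*(1-x-y)*py - b)).
  { apply Rmult_lt_0_compat; [apply Rmult_lt_0_compat|]; lra. }
  nra.
Qed.

Lemma ident (K b al eps w p : R) :
  K*w*(1-w)*p^2 + (al + b*(1-w))*p - eps = 0 ->
  4*(K*eps)*(1-2*w)^2 - b^2*(1+(1-2*w))^2 - 4*al*b*(1-2*w)
  = ((1-2*w)*(K*p) - b) *
    ((1-(1-2*w)^2)*((1-2*w)*(K*p)+b) + (4*al+2*b+2*b*(1-2*w))*(1-2*w)).
Proof.
  intros H.
  assert (He : eps = K*w*(1-w)*p^2 + (al + b*(1-w))*p) by lra.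
  rewrite He. ring.
Qed.

Lemma Fpos (K b al w p : R) : 0 < K -> 0 < b -> 0 < al -> 0 <= w -> w < 1/2 -> 0 < p ->
  0 < (1-(1-2*w)^2)*((1-2*w)*(K*p)+b) + (4*al+2*b+2*b*(1-2*w))*(1-2*w).
Proof.
  intros HK Hb Hal Hw0 Hw1 Hp.
  set (s := 1-2*w).
  assert (0 < s <= 1) by (unfold s; lra).
  assert (0 <= 1 - s^2) by nra.
  assert (0 < K*p) by nra.
  assert (0 <= s*(K*p)) by nra.
  assert (0 <= (1-s^2)*(s*(K*p)+b)) by (apply Rmult_le_pos; lra).
  assert (0 < (4*al+2*b+2*b*s)*s) by (apply Rmult_lt_0_compat; nra).
  lra.
Qed.

Theorem proposition5
  (tauD tauC epsD epsC alpha sigma gamma d c1 c2 : R)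
  (HtauC : 0 <= tauC) (HtauD : tauC < tauD)
  (HepsC : 0 <= epsC) (HepsD : epsC < epsD)
  (Halpha0 : 0 < alpha) (Halpha1 : alpha <= 1)
  (Hsigma0 : 0 <= sigma) (Hsigma1 : sigma < 1)
  (Hgamma0 : 0 <= gamma) (Hgamma1 : gamma < 1)
  (Hd : 0 < d) (Hc1 : 0 < c1) (Hc2 : 0 < c2)
  (p0 : R -> R)
  (Hp0 : forall omega, 0 <= omega <= 1 ->
           p0_root c1 c2 alpha tauD epsD (chi d sigma gamma) omega (p0 omega)) :
  (epsD > (c2 ^ 2 * tauD + alpha * c2) / (c1 * chi d sigma gamma * tauD) ->
     exists wt, 0 < wt < 1 / 2 /\
       (forall x y, 0 <= x -> x < y -> y < wt -> p0 y < p0 x) /\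
       (forall x y, wt < x -> x < y -> y <= 1 -> p0 x < p0 y)) /\
  (~ (epsD > (c2 ^ 2 * tauD + alpha * c2) / (c1 * chi d sigma gamma * tauD)) ->
     forall x y, 0 <= x -> x < y -> y <= 1 -> p0 x < p0 y).
Proof.
  assert (Hch : 0 < chi d sigma gamma) by (unfold chi, Rpower; apply exp_pos).
  set (ch := chi d sigma gamma) in *.
  assert (Ht : 0 < tauD) by lra.
  set (K := c1*ch*tauD^2).
  set (b := c2*tauD).
  assert (HK : 0 < K) by (unfold K; assert (0 < tauD^2) by (apply pow_lt; lra); assert (0 < c1*ch) by nra; nra).
  assert (Hb : 0 < b) by (unfold b; nra).
  assert (Hpos : forall w, 0 <= w <= 1 -> 0 < p0 w) by (intros w Hw; apply (Hp0 w Hw)).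
  assert (Heq : forall w, 0 <= w <= 1 ->
     K*w*(1-w)*(p0 w)^2 + (alpha + b*(1-w))*(p0 w) - epsD = 0).
  { intros w Hw. destruct (Hp0 w Hw) as [_ H]. rewrite <- H. unfold K, b. ring. }
  set (E := K*epsD).
  assert (Hthr : epsD > (c2 ^ 2 * tauD + alpha * c2) / (c1 * ch * tauD) <-> E > b^2 + alpha*b).
  { assert (HD : 0 < c1*ch*tauD) by (apply Rmult_lt_0_compat; nra).
    assert (Hq : (c2 ^ 2 * tauD + alpha * c2) / (c1 * ch * tauD) * (c1*ch*tauD) = c2 ^ 2 * tauD + alpha * c2)
      by (field; lra).
    set (q := (c2 ^ 2 * tauD + alpha * c2) / (c1 * ch * tauD)) in *.
    assert (HE : E = epsD * (c1*ch*tauD) * tauD) by (unfold E, K; ring).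
    assert (Hb2 : b^2 + alpha*b = q*(c1*ch*tauD)*tauD) by (rewrite Hq; unfold b; ring).
    rewrite HE, Hb2. split; intro H.
    - apply Rmult_lt_compat_r; [lra|]. apply Rmult_lt_compat_r; lra.
    - apply Rmult_lt_reg_r in H; [|lra]. apply Rmult_lt_reg_r in H; lra. }
  assert (Hkey : forall w, 0 <= w -> w < 1/2 ->
     4*E*(1-2*w)^2 - b^2*(1+(1-2*w))^2 - 4*alpha*b*(1-2*w)
     = ((1-2*w)*(K*p0 w) - b) *
    ((1-(1-2*w)^2)*((1-2*w)*(K*p0 w)+b) + (4*alpha+2*b+2*b*(1-2*w))*(1-2*w))
     /\ 0 < (1-(1-2*w)^2)*((1-2*w)*(K*p0 w)+b) + (4*alpha+2*b+2*b*(1-2*w))*(1-2*w)).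
  { intros w H0 H1. split.
    - unfold E. apply ident. apply Heq. lra.
    - apply Fpos; auto. apply Hpos; lra. }
  assert (Hbig : forall x y, 1/2 <= x -> x < y -> y <= 1 -> p0 x < p0 y).
  { intros x y H0 H1 H2.
    assert (0 < p0 x) by (apply Hpos; lra).
    assert (0 < p0 y) by (apply Hpos; lra).
    apply (cmp_inc K b alpha epsD x y); try lra.
    - apply Heq; lra.
    - apply Heq; lra.
    - assert (0 < K * p0 x) by nra. nra. }
  split.
  - intros Hc. apply Hthr in Hc.
    set (a := 4*E - b^2). set (c := 2*b^2 + 4*alpha*b).
    assert (Ha : 0 < a) by (unfold a; nra).
    assert (Hc0 : 0 < c) by (unfold c; nra).
    set (D := c^2 + 4*a*b^2).
    assert (HD : 0 <= D) by (unfold D; nra).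
    set (ss := (c + sqrt D)/(2*a)).
    assert (Hsq : sqrt D * sqrt D = D) by (apply sqrt_sqrt; auto).
    assert (Hsq0 : 0 <= sqrt D) by apply sqrt_pos.
    assert (Hss : 2*a*ss = c + sqrt D) by (unfold ss; field; lra).
    assert (HQss : a*ss^2 - c*ss - b^2 = 0).
    { assert (4*a*(a*ss^2 - c*ss - b^2) = 0).
      { replace (4*a*(a*ss^2 - c*ss - b^2)) with ((2*a*ss)^2 - 2*c*(2*a*ss) - 4*a*b^2) by ring.
        rewrite Hss. replace ((c + sqrt D)^2 - 2*c*(c+sqrt D) - 4*a*b^2) with (sqrt D * sqrt D - (c^2 + 4*a*b^2)) by ring. rewrite Hsq. unfold D. ring. }
      nra. }
    assert (Hss0 : 0 < ss) by (unfold ss; apply Rdiv_lt_0_compat; lra).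
    assert (Hamc : a - c - b^2 > 0) by (unfold a, c; lra).
    assert (Hss1 : ss < 1).
    { assert (sqrt D < 2*a - c).
      { destruct (Rlt_or_le (sqrt D) (2*a-c)) as [h|h]; auto.
        exfalso. assert (0 <= b^2) by nra.
        assert (Hh : (2*a-c)*(2*a-c) <= sqrt D * sqrt D) by (apply Rmult_le_compat; lra).
        rewrite Hsq in Hh. unfold D in Hh.
        assert (0 < a*(a-c-b^2)) by (apply Rmult_lt_0_compat; lra). nra. }
      nra. }
    assert (Hacs : a*ss > c).
    { assert (a*ss^2 > c*ss) by nra. nra. }
    assert (HQ : forall s, 4*E*s^2 - b^2*(1+s)^2 - 4*alpha*b*s = (s-ss)*(a*(s+ss)-c)).
    { intro s. unfold a, c in *. nra. }
    exists ((1-ss)/2). split; [lra|]. split.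
    + intros x y H0 H1 H2.
      assert (0 < p0 x) by (apply Hpos; lra).
      assert (0 < p0 y) by (apply Hpos; lra).
      destruct (Hkey y) as [Hk1 Hk2]; try lra.
      rewrite HQ in Hk1.
      assert (0 < (1-2*y - ss)*(a*(1-2*y+ss)-c)) by (apply Rmult_lt_0_compat; nra).
      assert ((1-2*y)*(K*p0 y) > b) by nra.
      apply (cmp_dec K b alpha epsD x y); try lra.
      * apply Heq; lra.
      * apply Heq; lra.
      * assert (0 < K * p0 y) by nra. nra.
    + intros x y H0 H1 H2.
      destruct (Rlt_or_le x (1/2)) as [hx|hx]; [|apply Hbig; lra].
      assert (0 < p0 x) by (apply Hpos; lra).
      assert (0 < p0 y) by (apply Hpos; lra).
      destruct (Hkey x) as [Hk1 Hk2]; try lra.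
      rewrite HQ in Hk1.
      assert ((1-2*x - ss)*(a*(1-2*x+ss)-c) < 0).
      { assert (0 < (ss - (1-2*x))*(a*(1-2*x+ss)-c)) by (apply Rmult_lt_0_compat; nra). nra. }
      assert ((1-2*x)*(K*p0 x) < b) by nra.
      apply (cmp_inc K b alpha epsD x y); try lra.
      * apply Heq; lra.
      * apply Heq; lra.
      * assert (0 < K * p0 x) by nra. nra.
  - intros Hc x y H0 H1 H2.
    assert (Hc' : ~ E > b^2 + alpha*b) by (intro h; apply Hc; apply Hthr; exact h).
    apply Rnot_gt_le in Hc'.
    destruct (Rlt_or_le x (1/2)) as [hx|hx]; [|apply Hbig; lra].
    assert (0 < p0 x) by (apply Hpos; lra).
    assert (0 < p0 y) by (apply Hpos; lra).
    destruct (Hkey x) as [Hk1 Hk2]; try lra.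
    set (s := 1 - 2*x) in *.
    assert (Hs : 0 < s <= 1) by (unfold s; lra).
    assert (HQ : 4*E*s^2 - b^2*(1+s)^2 - 4*alpha*b*s
       = (4*E - 4*b^2 - 4*alpha*b)*s^2 + (s-1)*((3*b^2+4*alpha*b)*s + b^2)) by ring.
    assert (0 <= (4*b^2 + 4*alpha*b - 4*E)*s^2) by (apply Rmult_le_pos; nra).
    assert ((s-1)*((3*b^2+4*alpha*b)*s + b^2) <= 0).
    { assert (0 <= b^2) by nra. assert (0 <= alpha*b) by nra.
      assert (0 <= (3*b^2+4*alpha*b)*s) by (apply Rmult_le_pos; lra).
      assert (0 <= (1-s)*((3*b^2+4*alpha*b)*s + b^2)) by (apply Rmult_le_pos; lra). lra. }
    assert (s*(K*p0 x) <= b) by nra.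
    apply (cmp_inc K b alpha epsD x y); try lra.
    * apply Heq; lra.
    * apply Heq; lra.
    * assert (0 < K * p0 x) by nra. unfold s in *. nra.
Qed.
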